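(* Let $G$ be a graph that has a vertex $v$ such that $G-v$ is acyclic. Then for every $k\ge 2$ and every $r\ge 3$, $R_r(\mathcal{B}(G),k)\le 4k|V(G)|+r-2$.
   Context: For a graph $G$, a hypergraph $H$ is a Berge-$G$ hypergraph if there are an injective map $\phi:V(G)\to V(H)$ and pairwise distinct hyperedges $e_{xy}\in E(H)$, one for each $xy\in E(G)$, with $\phi(x),\phi(y)\in e_{xy}$. $\mathcal{B}(G)$ denotes the family of all Berge-$G$ hypergraphs. For a family $\mathcal{H}$ of $r$-uniform hypergraphs, $R_r(\mathcal{H},k)$ is the smallest $n$ such that every $k$-coloring of the hyperedges of the complete $r$-uniform hypergraph $K_n^r$ contains a monochromatic subhypergraph belonging to $\mathcal{H}$. *)

(* Defs.v *)
From mathcomp Require Import all_boot.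
Set Implicit Arguments. Unset Strict Implicit. Unset Printing Implicit Defensive.

Definition simple_graph (T : finType) (g : rel T) : Prop :=
  symmetric g /\ irreflexive g.

(* The graph G - v is acyclic: there is no cycle (a duplicate-free closed
   g-walk on at least 3 vertices) avoiding v. *)
Definition acyclic_minus (T : finType) (g : rel T) (v : T) : Prop :=
  forall c : seq T, 3 <= size c -> v \notin c -> uniq c -> ~~ cycle g c.

Definition edge_set (T : finType) (g : rel T) : {set {set T}} :=
  [set [set x; y] | x in T, y in T & g x y].

(* A k-colouring of the hyperedges of K_n^r: a map from subsets of 'I_n
   (only the r-subsets matter) to colours 'I_k.
   [mono_berge g r col] : there is a colour c and a Berge-G hypergraph all of
   whose hyperedges are r-subsets of 'I_n (edges of K_n^r) of colour c. *)
Definition mono_berge (T : finType) (g : rel T) (r n k : nat)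
    (col : {set 'I_n} -> 'I_k) : Prop :=
  exists (c : 'I_k) (phi : T -> 'I_n) (eh : {set T} -> {set 'I_n}),
    [/\ injective phi,
        {in edge_set g &, injective eh} &
        forall x y, g x y ->
          [/\ phi x \in eh [set x; y], phi y \in eh [set x; y],
              #|eh [set x; y]| = r & col (eh [set x; y]) = c]].

Definition berge_ramsey_prop (T : finType) (g : rel T) (r k n : nat) : Prop :=
  forall col : {set 'I_n} -> 'I_k, mono_berge g r col.

(* Main.v *)
Require Import Defs.
From mathcomp Require Import all_boot zify.
Set Implicit Arguments. Unset Strict Implicit. Unset Printing Implicit Defensive.

Section Leaf.
Variables (T : finType) (g : rel T) (v : T).
Hypothesis sg : simple_graph g.
Hypothesis ac : acyclic_minus g v.

Lemma maxpath (A : {set T}) d : forall x p, x \in A -> all (mem A) p ->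
  uniq (x :: p) -> path g x p -> #|T| <= size (x :: p) + d ->
  exists x' p', [/\ x' \in A, all (mem A) p', uniq (x'::p'), path g x' p' &
     forall y, y \in A -> g x' y -> y \in x' :: p'].
Proof.
elim: d => [|d IH] x p xA pA u pa sz.
  exists x, p; split => // y yA gy; apply/negPn/negP => yn.
  have : uniq (y :: x :: p) by rewrite cons_uniq yn u.
  move/card_uniqP => h; have := max_card (mem (y :: x :: p)).
  by rewrite h /=; move: sz; rewrite addn0 /=; lia.
case: (boolP [exists y in A, g x y && (y \notin x :: p)]) => [/exists_inP [y yA /andP [gy yn]]|].
  apply: (IH y (x :: p)) => //=.
  - by rewrite xA.
  - by rewrite yn; move: u; rewrite cons_uniq.
  - by rewrite pa andbT; case: sg => sy _; rewrite sy.
  - by move: sz => /=; lia.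
rewrite negb_exists_in => /forallP H.
exists x, p; split => // y yA gy; have := H y; rewrite yA /= gy /=.
by rewrite negbK.
Qed.

Lemma leaf (A : {set T}) : v \notin A -> A != set0 ->
  exists2 u, u \in A & forall y z, y \in A -> z \in A -> g u y -> g u z -> y = z.
Proof.
move=> vA /set0Pn [x0 x0A].
have [x [p [xA pA u pa H]]] := @maxpath A #|T| x0 [::] x0A isT isT isT (leq_addl _ _).
exists x => // y z yA zA gy gz.
case: sg => sy ir.
have ny : forall w, w \in A -> g x w -> w \in p.
  move=> w wA gw; have := H w wA gw; rewrite inE => /orP [/eqP e|//].
  by move: gw; rewrite e ir.
have key : forall w, w \in p -> g x w -> w != head x p -> False.
  move=> w wp gw wh.
  set i := index w p.
  have ip : i < size p by rewrite index_mem.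
  have i1 : 0 < i.
    rewrite lt0n; apply/negP => /eqP i0.
    have := nth_index x wp; rewrite -/i i0 nth0 => e.
    by move: wh; rewrite e eqxx.
  have s3 : 3 <= size (x :: take i.+1 p) by rewrite /= (size_takel ip); lia.
  have uc : uniq (x :: take i.+1 p) by have := take_uniq i.+2 u.
  have vc : v \notin x :: take i.+1 p.
    rewrite inE negb_or; apply/andP; split.
      by apply/eqP => e; move: vA; rewrite e xA.
    apply/negP => /mem_take vp; move/allP: pA => /(_ _ vp); rewrite inE => vA'.
    by move: vA; rewrite vA'.
  have cc : cycle g (x :: take i.+1 p).
    rewrite /= rcons_path take_path //=.
    by rewrite (last_nth x) (size_takel ip) /= nth_take // nth_index // sy gw.
  by move: (ac s3 vc uc); rewrite cc.
have yp := ny y yA gy; have zp := ny z zA gz.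
case: (eqVneq y z) => // yz.
case: (eqVneq y (head x p)) => hy.
  exfalso; apply: (key z zp gz); by rewrite -hy eq_sym.
by exfalso; apply: (key y yp gy).
Qed.
End Leaf.
Section Core.
Variables (U : finType) (adj : rel U).
Hypothesis asym : symmetric adj.
Hypothesis airr : irreflexive adj.

Definition deg (W : {set U}) a := #|[set b in W | adj a b]|.

Lemma deg_del W a b : deg W b <= deg (W :\ a) b + adj b a.
Proof.
rewrite /deg (cardsD1 a [set c in W | adj b c]) inE.
have -> : [set c in W | adj b c] :\ a = [set c in W :\ a | adj b c].
  by apply/setP => c; rewrite !inE andbA.
rewrite addnC leq_add2l; by case: (a \in W); case: (adj b a).
Qed.

Lemma core t : forall W : {set U}, 2 * t * #|W| < \sum_(a in W) deg W a ->
  exists2 W', W' != set0 & forall a, a \in W' -> t < deg W' a.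
Proof.
move=> W; move: {2}#|W| (leqnn #|W|) => n; elim: n W => [|n IH] W hn hs.
  move: hn; rewrite leqn0 cards_eq0 => /eqP W0.
  by move: hs; rewrite W0 big_set0.
case: (boolP [exists a in W, deg W a <= t]) => [/exists_inP [a aW da]|].
  apply: (IH (W :\ a)).
    by move: hn; rewrite (cardsD1 a W) aW; lia.
  have e2 : \sum_(b in W | b != a) deg W b <=
            \sum_(b in W :\ a) deg (W :\ a) b + \sum_(b in W :\ a) adj b a.
    rewrite -big_split /=; rewrite [X in _ <= X](eq_bigl (fun b => (b \in W) && (b != a))); last first.
      by move=> b; rewrite !inE andbC.
    by apply: leq_sum => b _; apply: deg_del.
  have e3 : \sum_(b in W :\ a) (adj b a : nat) <= deg W a.
    rewrite (eq_bigr (fun b => if adj b a then 1 else 0)); last by move=> b _; case: (adj b a).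
    rewrite -big_mkcondr sum1_card /deg; apply: subset_leq_card.
    apply/subsetP => b; rewrite unfold_in !inE asym; by case/andP => /andP [_ ->] ->.
  move: hs; rewrite (bigD1 a aW) /=.
  move: hn; rewrite (cardsD1 a W) aW /= => hn hs.
  rewrite mulnDr muln1 in hs.
  set X := (X in _ < deg W a + X) in hs.
  have e2' : X <= \sum_(b in W :\ a) deg (W :\ a) b + \sum_(b in W :\ a) adj b a by exact e2.
  lia.
rewrite negb_exists_in => /forallP H.
exists W.
  apply/set0Pn; case: (pickP (mem W)) => [a aW|W0]; first by exists a.
  by move: hs; rewrite big_pred0 //.
by move=> a aW; have := H a; rewrite aW /= -ltnNge.
Qed.
End Core.
Lemma pick_out (U : finType) (B C : {set U}) : #|C| < #|B| -> exists2 b, b \in B & b \notin C.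
Proof.
move=> h; case: (boolP (B \subset C)) => [/subset_leq_card|/subsetPn [b ? ?]]; last by exists b.
by rewrite leqNgt h.
Qed.

Section Embed.
Variables (U : finType) (adj : rel U).
Hypothesis asym : symmetric adj.
Hypothesis airr : irreflexive adj.
Variables (W : {set U}) (t : nat) (w0 : U).
Hypothesis w0W : w0 \in W.
Hypothesis Wdeg : forall a, a \in W -> t < #|[set b in W | adj a b]|.
Variables (T : finType) (g : rel T) (v : T).
Hypothesis sg : simple_graph g.
Hypothesis leafP : forall A : {set T}, v \notin A -> A != set0 ->
  exists2 u, u \in A & forall y z, y \in A -> z \in A -> g u y -> g u z -> y = z.

Definition Inv (A : {set T}) (phi psi : T -> U) :=
 [/\ (forall y, y \in A -> phi y \in W /\ adj (phi y) (psi y)),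
     (forall y z, y \in A -> z \in A -> g y z -> adj (phi y) (phi z)),
     (forall y z, y \in A -> z \in A -> phi y = phi z -> y = z),
     (forall y z, y \in A -> z \in A -> psi y = psi z -> y = z) &
     (forall y z, y \in A -> z \in A -> phi y != psi z)].

Lemma embed n : forall A : {set T}, #|A| <= n -> v \notin A -> 2 * (#|A| - 1) <= t ->
  exists phi psi, Inv A phi psi.
Proof.
case: sg => gs gi.
elim: n => [|n IH] A hn vA ht.
  move: hn; rewrite leqn0 cards_eq0 => /eqP ->.
  by exists (fun _ => w0), (fun _ => w0); split => // y; rewrite inE.
case: (eqVneq A set0) => [->|An0].
  by exists (fun _ => w0), (fun _ => w0); split => // y; rewrite inE.
have [u uA uleaf] := leafP vA An0.
have cA := cardsD1 u A; rewrite uA /= in cA.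
have [phi [psi [I1 I2 I3 I4 I5]]] : exists phi psi, Inv (A :\ u) phi psi.
  apply: IH; first by lia.
    by apply/negP; rewrite inE => /andP [_ vA']; move: vA; rewrite vA'.
  by lia.
set Im := phi @: (A :\ u) :|: psi @: (A :\ u).
have hIm : #|Im| <= t.
  apply: leq_trans (leq_card_setU _ _) _.
  have := leq_imset_card phi (A :\ u); have := leq_imset_card psi (A :\ u).
  lia.
pose q := if [pick p in A :\ u | g u p] is Some p then phi p else w0.
have qW : q \in W.
  rewrite /q; case: pickP => [p /andP [pA _]|_] //; by case: (I1 p pA).
have [a aN aIm] := pick_out (leq_ltn_trans hIm (Wdeg qW)).
have aW : a \in W by move: aN; rewrite inE => /andP [].
have [b bN bIm] := pick_out (leq_ltn_trans hIm (Wdeg aW)).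
have ab : adj a b by move: bN; rewrite inE => /andP [].
have qa : adj q a by move: aN; rewrite inE => /andP [].
have phiIm : forall y, y \in A :\ u -> phi y \in Im.
  by move=> y yA; rewrite inE; apply/orP; left; apply: imset_f.
have psiIm : forall y, y \in A :\ u -> psi y \in Im.
  by move=> y yA; rewrite inE; apply/orP; right; apply: imset_f.
have inA' : forall y, y \in A -> y != u -> y \in A :\ u.
  by move=> y yA yu; rewrite !inE yu.
exists (fun y => if y == u then a else phi y), (fun y => if y == u then b else psi y).
split.
- move=> y yA; case: eqP => [_|/eqP yu]; first by [].
  exact: I1 (inA' _ yA yu).
- move=> y z yA zA gyz.
  have side : forall z, z \in A -> z != u -> g u z -> adj (phi z) a.
    move=> z' zA' zu gz; rewrite asym.
    move: qa; rewrite /q; case: pickP => [p|H].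
      move=> /andP [pA gp].
      have pA' : p \in A by move: pA; rewrite inE => /andP [].
      by rewrite asym (uleaf z' p zA' pA' gz gp).
    by have := H z'; rewrite /= !inE zu zA' gz.
  case: (eqVneq y u) => [yu|yu]; case: (eqVneq z u) => [zu|zu].
  + by move: gyz; rewrite yu zu gi.
  + rewrite asym; apply: side => //; by rewrite -yu.
  + apply: side => //; by rewrite -zu gs.
  + exact: I2 (inA' _ yA yu) (inA' _ zA zu) gyz.
- move=> y z yA zA; case: (eqVneq y u) => [->|yu]; case: (eqVneq z u) => [->|zu] //.
  + by move=> e; move: aIm; rewrite e phiIm // inA'.
  + by move=> e; move: aIm; rewrite -e phiIm // inA'.
  + exact: I3 (inA' _ yA yu) (inA' _ zA zu).
- move=> y z yA zA; case: (eqVneq y u) => [->|yu]; case: (eqVneq z u) => [->|zu] //.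
  + by move=> e; move: bIm; rewrite e psiIm // inA'.
  + by move=> e; move: bIm; rewrite -e psiIm // inA'.
  + exact: I4 (inA' _ yA yu) (inA' _ zA zu).
- move=> y z yA zA; case: (eqVneq y u) => [_|yu]; case: (eqVneq z u) => [_|zu] //.
  + by apply/eqP => e; move: ab; rewrite e airr.
  + by apply/eqP => e; move: aIm; rewrite e psiIm // inA'.
  + by apply/eqP => e; move: bIm; rewrite -e phiIm // inA'.
  + exact: I5 (inA' _ yA yu) (inA' _ zA zu).
Qed.
End Embed.
Lemma card_lt_ord n j : j <= n -> #|[set i : 'I_n | i < j]| = j.
Proof.
elim: j => [|j IH] h.
  by apply/eqP; rewrite cards_eq0; apply/eqP/setP => i; rewrite !inE.
have hj : j < n by [].
have -> : [set i : 'I_n | i < j.+1] = Ordinal hj |: [set i : 'I_n | i < j].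
  by apply/setP => i; rewrite !inE ltnS leq_eqVlt -val_eqE.
by rewrite cardsU1 inE /= ltnn IH // ltnW.
Qed.

Lemma part_card (U : finType) k (B : {set U}) (f : U -> 'I_k) :
  \sum_(c < k) #|[set b in B | f b == c]| = #|B|.
Proof.
rewrite -sum1_card (partition_big f xpredT) //=.
by apply: eq_bigr => c _; rewrite -sum1_card; apply: eq_bigl => b; rewrite !inE.
Qed.

Lemma pigeon k X (D : 'I_k -> nat) : 0 < k -> \sum_(c < k) D c = X ->
  exists c, X <= k * D c.
Proof.
move=> k0 hs; case: (boolP [exists c, X <= k * D c]) => [/existsP [c hc]|]; first by exists c.
rewrite negb_exists => /forallP H; exfalso.
have X0 : 0 < X by have := H (Ordinal k0); rewrite -ltnNge; lia.
have : \sum_(c < k) k * D c <= \sum_(c < k) (X - 1).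
  apply: leq_sum => c _; have := H c; rewrite -ltnNge; lia.
rewrite -big_distrr /= hs sum_nat_const card_ord; nia.
Qed.
Lemma cardS2 n (S : {set 'I_n}) a b : a \notin S -> b \notin S -> a != b ->
  #|S :|: [set a; b]| = #|S| + 2.
Proof.
move=> aS bS ab.
have -> : S :|: [set a; b] = a |: (b |: S).
  by apply/setP => w; rewrite !inE; case: (w == a); case: (w == b); case: (w \in S).
rewrite cardsU1 cardsU1 !inE negb_or ab aS bS /=; lia.
Qed.

Theorem corollary3 (T : finType) (g : rel T) (v : T) (k r : nat) :
  simple_graph g -> acyclic_minus g v -> 2 <= k -> 3 <= r ->
  exists n, n <= 4 * k * #|T| + r - 2 /\ berge_ramsey_prop g r k n.
Proof.
move=> sg ac k2 r3.
have sg' := sg; case: sg' => gs gi.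
set m := #|T|.
have m1 : 0 < m by apply/card_gt0P; exists v.
set n := 4 * k * m + (r - 2).
exists n; split; first by rewrite /n; lia.
move=> col.
have n0 : 0 < n by rewrite /n; lia.
set x := Ordinal n0.
have [S [cS xS]] : exists S : {set 'I_n}, #|S| = r - 2 /\ x \in S.
  exists [set i : 'I_n | i < r - 2]; split; first by apply: card_lt_ord; rewrite /n; lia.
  by rewrite inE /=; lia.
set V0 := ~: S.
have cV : #|V0| = 4 * k * m by rewrite cardsCs setCK cS card_ord /n; lia.
pose adj (c : 'I_k) (a b : 'I_n) :=
  [&& a \notin S, b \notin S, a != b & col (S :|: [set a; b]) == c].
have asym : forall c, symmetric (adj c).
  move=> c a b; rewrite /adj.
  have -> : [set a; b] = [set b; a] by apply/setP => w; rewrite !inE orbC.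
  by rewrite eq_sym; case: (a \in S); case: (b \in S).
have airr : forall c, irreflexive (adj c) by move=> c a; rewrite /adj eqxx /= !andbF.
pose D c := \sum_(a in V0) deg (adj c) V0 a.
have sumD : \sum_(c < k) D c = #|V0| * (#|V0| - 1).
  rewrite /D exchange_big /=.
  transitivity (\sum_(a in V0) (#|V0| - 1)); last by rewrite sum_nat_const.
  apply: eq_bigr => a aV.
  transitivity #|[set b in V0 | b != a]|.
    rewrite -(part_card [set b in V0 | b != a] (fun b => col (S :|: [set a; b]))).
    apply: eq_bigr => c _; rewrite /deg; apply: eq_card => b.
    move: aV; rewrite /adj !inE => ->; rewrite eq_sym.
    by case: (b \in S); case: (b == a).
  have -> : [set b in V0 | b != a] = V0 :\ a by apply/setP => b; rewrite !inE andbC.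
  by rewrite (cardsD1 a V0) aV /= addKn.
have k0 : 0 < k by lia.
have [c hc] := pigeon k0 sumD.
set t := 2 * (m - 2).
have hD : 2 * t * #|V0| < \sum_(a in V0) deg (adj c) V0 a.
  rewrite -/(D c); move: hc; rewrite cV /t; nia.
have [W /set0Pn [w0 w0W] Wdeg] := core (asym c) hD.
have vA : v \notin [set~ v] by rewrite !inE eqxx.
have ht : 2 * (#|[set~ v]| - 1) <= t by rewrite cardsC1 /t -/m; lia.
have [phi0 [psi0 [I1 I2 I3 I4 I5]]] :=
  embed (asym c) (airr c) w0W Wdeg sg (leaf sg ac) (leqnn #|[set~ v]|) vA ht.

have inA : forall y, y != v -> y \in [set~ v] by move=> y yv; rewrite !inE yv.
have phiS : forall y, y != v -> phi0 y \notin S.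
  by move=> y yv; have [_] := I1 y (inA y yv); case/and4P.
have psiS : forall y, y != v -> psi0 y \notin S.
  by move=> y yv; have [_] := I1 y (inA y yv); case/and4P.
pose phi y := if y == v then x else phi0 y.
pose psi y := if y == v then x else psi0 y.
pose eh (e : {set T}) := S :|: phi @: e :|: (if v \in e then psi @: e else set0).
have phiv : phi v = x by rewrite /phi eqxx.
have psiv : psi v = x by rewrite /psi eqxx.
have phin : forall y, y != v -> phi y = phi0 y by move=> y yv; rewrite /phi (negbTE yv).
have psin : forall y, y != v -> psi y = psi0 y by move=> y yv; rewrite /psi (negbTE yv).
have phi_inj : injective phi.
  move=> y z; case: (eqVneq y v) => [->|yv]; case: (eqVneq z v) => [->|zv] //.
  - by rewrite phiv phin // => e; move: (phiS z zv); rewrite -e xS.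
  - by rewrite phiv phin // => e; move: (phiS y yv); rewrite e xS.
  - by rewrite !phin //; apply: I3; apply: inA.
have memphi : forall e w, w != v -> (phi w \in eh e) = (w \in e).
  move=> e w wv; rewrite /eh !in_setU phin // (negbTE (phiS w wv)) /=.
  have -> : (phi0 w \in phi @: e) = (w \in e).
    apply/imsetP/idP => [[y ye]|we]; last by exists w => //; rewrite phin.
    by rewrite -(phin w wv) => /phi_inj ->.
  case: (v \in e); last by rewrite inE orbF.
  have -> : (phi0 w \in psi @: e) = false => //; last by rewrite orbF.
  apply/imsetP => [[y ye]]; case: (eqVneq y v) => [->|yv].
    by rewrite psiv => e1; move: (phiS w wv); rewrite e1 xS.
  by rewrite psin // => /eqP; apply/negP; apply: I5; apply: inA.
have mempsi : forall e w, w != v -> (psi w \in eh e) = (v \in e) && (w \in e).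
  move=> e w wv; rewrite /eh !in_setU psin // (negbTE (psiS w wv)) /=.
  have -> : (psi0 w \in phi @: e) = false.
    apply/imsetP => [[y ye]]; case: (eqVneq y v) => [->|yv].
      by rewrite phiv => e1; move: (psiS w wv); rewrite e1 xS.
    by rewrite phin // => /eqP; rewrite eq_sym; apply/negP; apply: I5; apply: inA.
  case: (v \in e); last by rewrite inE.
  apply/imsetP/idP => [[y ye]|we]; last by exists w => //; rewrite psin.
  case: (eqVneq y v) => [->|yv].
    by rewrite psiv => e1; move: (psiS w wv); rewrite e1 xS.
  by rewrite psin // => /I4 -> //; apply: inA.
have formv : forall z, g v z -> exists2 ab : 'I_n * 'I_n, adj c ab.1 ab.2 & eh [set v; z] = S :|: [set ab.1; ab.2].
  move=> z gz; have zv : z != v by apply/eqP => e; move: gz; rewrite e gi.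
  exists (phi0 z, psi0 z); first by have [_] := I1 z (inA z zv).
  rewrite /eh !inE eqxx /= !imsetU1 !imset_set1 phiv psiv !phin // psin //.
  apply/setP => w; rewrite !inE; case: (eqVneq w x) => [->|_]; first by rewrite xS.
  by rewrite /=; case: (w \in S); case: (w == phi0 z); case: (w == psi0 z).
have form : forall y z, g y z -> exists2 ab : 'I_n * 'I_n, adj c ab.1 ab.2 & eh [set y; z] = S :|: [set ab.1; ab.2].
  move=> y z gyz; case: (eqVneq y v) => [yv|yv].
    by move: gyz; rewrite yv; exact: formv.
  case: (eqVneq z v) => [zv|zv].
    have -> : [set y; z] = [set v; y] by apply/setP => w; rewrite !inE zv orbC.
    by apply: formv; rewrite gs -zv.
  exists (phi0 y, phi0 z); first exact: I2 (inA y yv) (inA z zv) gyz.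
  have vn : v \in [set y; z] = false by rewrite !inE !(eq_sym v) (negbTE yv) (negbTE zv).
  by rewrite /eh vn setU0 imsetU1 imset_set1 !phin.
exists c, phi, eh; split => //.
- move=> e1 e2 /imset2P [y1 z1 _ /[!inE] g1 ->] /imset2P [y2 z2 _ /[!inE] g2 ->] he.
  have other : forall y z, g y z -> v \in [set y; z] -> exists2 o, o != v & o \in [set y; z].
    move=> y z gyz; rewrite !inE => /orP [/eqP yv|/eqP zv].
      exists z; last by rewrite !inE eqxx orbT.
      by apply/eqP => e; move: gyz; rewrite e -yv gi.
    exists y; last by rewrite !inE eqxx.
    by apply/eqP => e; move: gyz; rewrite e -zv gi.
  apply/setP => w; case: (eqVneq w v) => [->|wv]; last by rewrite -!memphi // he.
  apply/idP/idP => vin.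
    have [o ov oin] := other _ _ g1 vin.
    by have := mempsi [set y1; z1] o ov; rewrite vin oin he mempsi // => /andP [].
  have [o ov oin] := other _ _ g2 vin.
  by have := mempsi [set y2; z2] o ov; rewrite vin oin -he mempsi // => /andP [].
- move=> y z gyz; have [[a b] /= hab he] := form y z gyz.
  have phiy : phi y \in eh [set y; z].
    by rewrite /eh !in_setU; apply/orP; left; apply/orP; right; apply: imset_f; rewrite !inE eqxx.
  have phiz : phi z \in eh [set y; z].
    by rewrite /eh !in_setU; apply/orP; left; apply/orP; right; apply: imset_f; rewrite !inE eqxx orbT.
  move: hab; rewrite /adj => /and4P [aS bS ab /eqP cc].
  split => //; rewrite he //.
  by rewrite cardS2 // cS; lia.
Qed.
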